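(* Let $L$ be an algebraic frame, $X_L$ its Priestley space, and $Y_L$ the spatial part of $X_L$. The following are equivalent: (1) $L$ is an arithmetic frame; (2) $X_L$ is an arithmetic L-space; (3) $Y_L$ is a stably compactly based space.
   Context: A frame is a complete lattice satisfying $a\wedge\bigvee S=\bigvee\{a\wedge s\mid s\in S\}$. In a frame $L$, $a\ll b$ means whenever $b\le\bigvee S$ there is finite $T\subseteq S$ with $a\le\bigvee T$; $a$ is compact if $a\ll a$; $K(L)$ is the set of compact elements. $L$ is algebraic if $a=\bigvee\{b\in K(L)\mid b\le a\}$ for all $a$, and arithmetic if it is algebraic and $\ll$ is stable ($a\ll b$ and $a\ll c$ imply $a\ll b\wedge c$); equivalently, an algebraic frame in which the meet of two compact elements is compact. A Priestley space is a Stone space $X$ with a partial order such that clopen upsets separate points. An L-space is a Priestley space in which the downset of each clopen set is clopen and the closure of each open upset is open. ${\sf ClopUp}(X)$ is the set of clopen upsets; $\mathrm{cl}$ denotes closure. The Priestley space $X_L$ is the set of prime filters of $L$ ordered by inclusion with topology generated by the sets $\varphi(a)=\{x\mid a\in x\}$ and their complements. The spatial part of $X$ is $Y=\{y\in X\mid{\downarrow}y\text{ clopen}\}$, topologized by declaring $V\subseteq Y$ open iff $V=U\cap Y$ for some $U\in{\sf ClopUp}(X)$. A Scott upset is a closed upset $F$ with $\min F\subseteq Y$; ${\sf ClopSUp}(X)$ is the set of clopen Scott upsets. For $U,V\in{\sf ClopUp}(X)$, $V\ll U$ means that for every open upset $W$, $U\subseteq\mathrm{cl}\,W$ implies $V\subseteq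 W$; $\ker U=\bigcup\{V\in{\sf ClopUp}(X)\mid V\ll U\}$; $\mathrm{core}\,U=\bigcup\{V\in{\sf ClopSUp}(X)\mid V\subseteq U\}$. An algebraic L-space is one where $\mathrm{core}\,U$ is dense in $U$ for each $U\in{\sf ClopUp}(X)$; an arithmetic L-space is an algebraic L-space with $\ker(U\cap V)=\ker U\cap\ker V$ for all $U,V\in{\sf ClopUp}(X)$. A topological space is stably compactly based if it is sober, has a basis of compact open sets, and the intersection of any two compact open sets is compact. *)

(* Defs.v *)
From Stdlib Require Import List.
Set Implicit Arguments.
Unset Strict Implicit.

Record Frame := {
  fcar :> Type;
  fle : fcar -> fcar -> Prop;
  fle_refl : forall a, fle a a;
  fle_trans : forall a b c, fle a b -> fle b c -> fle a c;
  fle_antisym : forall a b, fle a b -> fle b a -> a = b;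
  fsup : (fcar -> Prop) -> fcar;
  fsup_ub : forall (S : fcar -> Prop) a, S a -> fle a (fsup S);
  fsup_least : forall (S : fcar -> Prop) b,
      (forall a, S a -> fle a b) -> fle (fsup S) b;
  fmeet : fcar -> fcar -> fcar;
  fmeet_lb_l : forall a b, fle (fmeet a b) a;
  fmeet_lb_r : forall a b, fle (fmeet a b) b;
  fmeet_glb : forall a b c, fle c a -> fle c b -> fle c (fmeet a b);
  fdistr : forall a (S : fcar -> Prop),
      fmeet a (fsup S) = fsup (fun c => exists s, S s /\ c = fmeet a s)
}.

Section FrameDefs.
Variable L : Frame.

Definition ftop : L := fsup (fun _ : L => True).
Definition fbot : L := fsup (fun _ : L => False).
Definition fjoin (a b : L) : L := fsup (fun c => c = a \/ c = b).

Definition way_below (a b : L) : Prop :=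
  forall S : L -> Prop, fle b (fsup S) ->
    exists T : list L, (forall t, In t T -> S t) /\
                       fle a (fsup (fun t => In t T)).

Definition compact_el (a : L) : Prop := way_below a a.

Definition algebraic_frame : Prop :=
  forall a : L, a = fsup (fun b => compact_el b /\ fle b a).

Definition arithmetic_frame : Prop :=
  algebraic_frame /\
  forall a b c : L, way_below a b -> way_below a c -> way_below a (fmeet b c).

Definition prime_filter (x : L -> Prop) : Prop :=
  (forall a b, x a -> fle a b -> x b) /\
  x ftop /\
  (forall a b, x a -> x b -> x (fmeet a b)) /\
  ~ x fbot /\
  (forall a b, x (fjoin a b) -> x a \/ x b).
End FrameDefs.

Section Topology.
Variable T : Type.
Variable O : (T -> Prop) -> Prop.

Definition is_topology : Prop :=
  O (fun _ => True) /\
  (forall U V, O U -> O V -> O (fun x => U x /\ V x)) /\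
  (forall C : (T -> Prop) -> Prop, (forall U, C U -> O U) ->
     O (fun x => exists U, C U /\ U x)).

Definition closed_set (A : T -> Prop) : Prop := O (fun x => ~ A x).
Definition clopen (A : T -> Prop) : Prop := O A /\ closed_set A.

Definition closure (A : T -> Prop) : T -> Prop :=
  fun x => forall U, O U -> U x -> exists y, U y /\ A y.

Definition compact_set (K : T -> Prop) : Prop :=
  forall C : (T -> Prop) -> Prop, (forall U, C U -> O U) ->
    (forall x, K x -> exists U, C U /\ U x) ->
    exists l : list (T -> Prop), (forall U, In U l -> C U) /\
      (forall x, K x -> exists U, In U l /\ U x).

Definition hausdorff : Prop :=
  forall x y : T, x <> y -> exists U V, O U /\ O V /\ U x /\ V y /\
    (forall z, U z -> V z -> False).

Definition zero_dimensional : Prop :=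
  forall U, O U -> forall x, U x ->
    exists C, clopen C /\ C x /\ (forall z, C z -> U z).

Definition stone_space : Prop :=
  is_topology /\ compact_set (fun _ => True) /\ hausdorff /\ zero_dimensional.

Definition irreducible_closed (F : T -> Prop) : Prop :=
  closed_set F /\ (exists x, F x) /\
  forall G H, closed_set G -> closed_set H ->
    (forall x, F x -> G x \/ H x) ->
    (forall x, F x -> G x) \/ (forall x, F x -> H x).

Definition sober : Prop :=
  forall F, irreducible_closed F ->
    exists y, (forall z, F z <-> closure (fun w => w = y) z) /\
      forall y', (forall z, F z <-> closure (fun w => w = y') z) -> y' = y.

Definition stably_compactly_based : Prop :=
  sober /\
  (forall U, O U -> forall x, U x ->
     exists K, O K /\ compact_set K /\ K x /\ (forall z, K z -> U z)) /\
  (forall K1 K2, O K1 -> compact_set K1 -> O K2 -> compact_set K2 ->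
     compact_set (fun x => K1 x /\ K2 x)).

Variable le : T -> T -> Prop.

Definition upset (A : T -> Prop) : Prop := forall x y, A x -> le x y -> A y.
Definition downset_of (A : T -> Prop) : T -> Prop :=
  fun x => exists y, A y /\ le x y.
Definition clopen_upset (A : T -> Prop) : Prop := clopen A /\ upset A.

Definition partial_order : Prop :=
  (forall x, le x x) /\ (forall x y z, le x y -> le y z -> le x z) /\
  (forall x y, le x y -> le y x -> x = y).

Definition priestley_space : Prop :=
  stone_space /\ partial_order /\
  forall x y, ~ le x y -> exists U, clopen_upset U /\ U x /\ ~ U y.

Definition L_space : Prop :=
  priestley_space /\
  (forall A, clopen A -> clopen (downset_of A)) /\
  (forall W, O W -> upset W -> O (closure W)).

Definition spatial_pt (y : T) : Prop := clopen (downset_of (fun w => w = y)).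

Definition minimal_in (F : T -> Prop) (x : T) : Prop :=
  F x /\ forall z, F z -> le z x -> z = x.

Definition scott_upset (F : T -> Prop) : Prop :=
  closed_set F /\ upset F /\ forall x, minimal_in F x -> spatial_pt x.

Definition clopen_scott_upset (F : T -> Prop) : Prop :=
  clopen F /\ scott_upset F.

Definition sp_way_below (V U : T -> Prop) : Prop :=
  forall W, O W -> upset W -> (forall x, U x -> closure W x) ->
    forall x, V x -> W x.

Definition ker (U : T -> Prop) : T -> Prop :=
  fun x => exists V, clopen_upset V /\ sp_way_below V U /\ V x.

Definition core (U : T -> Prop) : T -> Prop :=
  fun x => exists V, clopen_scott_upset V /\ (forall z, V z -> U z) /\ V x.

Definition algebraic_L_space : Prop :=
  L_space /\
  forall U, clopen_upset U -> forall x, U x -> closure (core U) x.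

Definition arithmetic_L_space : Prop :=
  algebraic_L_space /\
  forall U V, clopen_upset U -> clopen_upset V ->
    forall x, ker (fun z => U z /\ V z) x <-> (ker U x /\ ker V x).
End Topology.

Section PriestleyOfFrame.
Variable L : Frame.

Definition XL : Type := { x : L -> Prop | prime_filter x }.

Definition XL_le (x y : XL) : Prop :=
  forall a, proj1_sig x a -> proj1_sig y a.

Definition phi (a : L) : XL -> Prop := fun x => proj1_sig x a.

Definition XL_subbasic (S : XL -> Prop) : Prop :=
  exists a, (forall x, S x <-> phi a x) \/ (forall x, S x <-> ~ phi a x).

Definition XL_open (U : XL -> Prop) : Prop :=
  forall x, U x -> exists l : list (XL -> Prop),
    (forall S, In S l -> XL_subbasic S) /\ (forall S, In S l -> S x) /\
    (forall z, (forall S, In S l -> S z) -> U z).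

Definition YL : Type := { y : XL | spatial_pt XL_open XL_le y }.

Definition YL_open (V : YL -> Prop) : Prop :=
  exists U : XL -> Prop, clopen_upset XL_open XL_le U /\
    forall y : YL, V y <-> U (proj1_sig y).
End PriestleyOfFrame.

(* Main.v *)
From Stdlib Require Import List Classical ClassicalEpsilon FunctionalExtensionality PropExtensionality ProofIrrelevance.
Require Import Defs.

Definition sub {T : Type} (A B : T -> Prop) := forall x, A x -> B x.

Lemma set_ext {T : Type} (A B : T -> Prop) : sub A B -> sub B A -> A = B.
Proof.
  intros H1 H2. apply functional_extensionality; intro x.
  apply propositional_extensionality; split; auto.
Qed.

Section Zorn.
Variable T : Type.
Variable P : (T -> Prop) -> Prop.
Variable A : T -> Prop.
Hypothesis PA : P A.
Hypothesis Pchain : forall C : (T -> Prop) -> Prop,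
  (forall S, C S -> P S /\ sub A S) ->
  (forall S1 S2, C S1 -> C S2 -> sub S1 S2 \/ sub S2 S1) ->
  P (fun x => A x \/ exists S, C S /\ S x).

Definition better (S S' : T -> Prop) := P S' /\ sub S S' /\ exists x, S' x /\ ~ S x.

Definition zg (S : T -> Prop) : T -> Prop :=
  match excluded_middle_informative (exists S', better S S') with
  | left H => proj1_sig (constructive_indefinite_description _ H)
  | right _ => S end.

Lemma zg_better S : (exists S', better S S') -> better S (zg S).
Proof.
  intro H. unfold zg. destruct (excluded_middle_informative _) as [H'|H'].
  - exact (proj2_sig (constructive_indefinite_description _ H')).
  - contradiction.
Qed.

Lemma zg_sub S : sub S (zg S).
Proof.
  unfold zg. destruct (excluded_middle_informative _) as [H'|H'].
  - destruct (proj2_sig (constructive_indefinite_description _ H')) as [_ [? _]]; auto.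
  - intros x h; exact h.
Qed.

Lemma zg_P S : P S -> P (zg S).
Proof.
  unfold zg. destruct (excluded_middle_informative _) as [H'|H'].
  - destruct (proj2_sig (constructive_indefinite_description _ H')) as [? _]; auto.
  - auto.
Qed.

Definition zsup (C : (T -> Prop) -> Prop) : T -> Prop :=
  fun x => A x \/ exists S, C S /\ S x.

Inductive tower : (T -> Prop) -> Prop :=
| tw_base : tower A
| tw_succ S : tower S -> tower (zg S)
| tw_sup C : (forall S, C S -> tower S) -> tower (zsup C).

Lemma tower_A S : tower S -> sub A S.
Proof.
  induction 1.
  - intros x h; exact h.
  - intros x h. apply zg_sub. auto.
  - intros x h. left; exact h.
Qed.

Lemma zsup_ub C S : C S -> sub S (zsup C).
Proof. intros HC x h. right. exists S. auto. Qed.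

Lemma zsup_least C U : sub A U -> (forall S, C S -> sub S U) -> sub (zsup C) U.
Proof. intros HA HS x [h|[S [h1 h2]]]; eauto. eapply HS; eauto. Qed.

Definition extreme c := forall x, tower x -> sub x c -> ~ sub c x -> sub (zg x) c.

Lemma claim1 c : tower c -> extreme c -> forall y, tower y -> sub y c \/ sub (zg c) y.
Proof.
  intros Tc Ec y Ty. induction Ty as [|y Ty IH|C HC IH].
  - left. apply tower_A; auto.
  - destruct IH as [IH|IH].
    + destruct (classic (sub c y)) as [H|H].
      * right. assert (y = c) by (apply set_ext; auto). subst. intros x h; exact h.
      * left. apply Ec; auto.
    + right. intros x h. apply zg_sub. auto.
  - destruct (classic (exists S, C S /\ ~ sub S c)) as [[S [HS HnS]]|H].
    + right. destruct (IH S HS) as [h|h]; [contradiction|].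
      intros x hx. apply (zsup_ub C S HS). auto.
    + left. apply zsup_least. apply tower_A; auto.
      intros S HS. destruct (classic (sub S c)); auto. exfalso; apply H; eauto.
Qed.

Lemma claim2 c : tower c -> extreme c.
Proof.
  induction 1 as [|c Tc IH|C HC IH].
  - intros x Tx h1 h2. exfalso. apply h2. apply tower_A; auto.
  - intros x Tx h1 h2.
    destruct (claim1 c Tc IH x Tx) as [h|h]; [|contradiction].
    destruct (classic (sub c x)) as [h'|h'].
    + assert (x = c) by (apply set_ext; auto). subst. intros z hz; exact hz.
    + intros z hz. apply zg_sub. apply (IH x Tx h h'). auto.
  - intros x Tx h1 h2.
    destruct (classic (exists S, C S /\ ~ sub (zg S) x)) as [[S [HS HnS]]|H].
    + destruct (claim1 S (HC S HS) (IH S HS) x Tx) as [h|h]; [|contradiction].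
      destruct (classic (sub S x)) as [h'|h'].
      * assert (x = S) by (apply set_ext; auto). subst.
        destruct (claim1 S (HC S HS) (IH S HS) (zsup C) (tw_sup C HC)) as [k|k]; auto.
        contradiction.
      * intros z hz. apply (zsup_ub C S HS). apply (IH S HS x Tx h h'). auto.
    + exfalso. apply h2. apply zsup_least. apply tower_A; auto.
      intros S HS. destruct (classic (sub (zg S) x)) as [k|k].
      * intros z hz. apply k. apply zg_sub; auto.
      * exfalso. apply H; eauto.
Qed.

Lemma tower_chain x y : tower x -> tower y -> sub x y \/ sub y x.
Proof.
  intros Tx Ty. destruct (claim1 x Tx (claim2 x Tx) y Ty) as [h|h]; auto.
  left. intros z hz. apply h. apply zg_sub; auto.
Qed.

Lemma tower_P S : tower S -> P S.
Proof.
  induction 1 as [|S TS IH|C HC IH].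
  - auto.
  - apply zg_P; auto.
  - apply Pchain.
    + intros S HS. split; auto. apply tower_A; auto.
    + intros S1 S2 H1 H2. apply tower_chain; auto.
Qed.

Theorem zorn : exists M, P M /\ sub A M /\ forall S, P S -> sub M S -> sub S M.
Proof.
  set (U := zsup tower).
  assert (TU : tower U) by (apply tw_sup; auto).
  exists U. split; [apply tower_P; auto|]. split; [apply tower_A; auto|].
  intros S PS HUS x Sx. apply NNPP. intro nU.
  assert (B : better U (zg U)).
  { apply zg_better. exists S. split; auto. split; auto. exists x; auto. }
  destruct B as [_ [_ [z [h1 h2]]]]. apply h2.
  apply (zsup_ub tower (zg U)); auto. apply tw_succ; auto.
Qed.
End Zorn.
Set Implicit Arguments.
Unset Strict Implicit.

Section FrameLemmas.
Variable L : Frame.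
Local Notation "a ⊑ b" := (@fle L a b) (at level 70).
Local Notation sup := (@fsup L).
Local Notation meet := (@fmeet L).
Local Notation join := (@fjoin L).

Lemma le_refl a : a ⊑ a. Proof. apply fle_refl. Qed.
Lemma le_trans a b c : a ⊑ b -> b ⊑ c -> a ⊑ c. Proof. apply fle_trans. Qed.
Hint Resolve le_refl : core.

Lemma sup_mono (S T : L -> Prop) : (forall a, S a -> T a) -> sup S ⊑ sup T.
Proof. intro H. apply fsup_least. intros a Ha. apply fsup_ub. auto. Qed.

Lemma sup_mono2 (S T : L -> Prop) : (forall a, S a -> exists b, T b /\ a ⊑ b) -> sup S ⊑ sup T.
Proof. intro H. apply fsup_least. intros a Ha. destruct (H a Ha) as [b [Hb Hab]].
  eapply le_trans; [exact Hab|]. apply fsup_ub. auto. Qed.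

Lemma join_l a b : a ⊑ join a b. Proof. apply fsup_ub. auto. Qed.
Lemma join_r a b : b ⊑ join a b. Proof. apply fsup_ub. auto. Qed.
Lemma join_least a b c : a ⊑ c -> b ⊑ c -> join a b ⊑ c.
Proof. intros. apply fsup_least. intros x [->| ->]; auto. Qed.
Lemma bot_le a : fbot L ⊑ a. Proof. apply fsup_least. intros x []. Qed.
Lemma le_top a : a ⊑ ftop L. Proof. apply fsup_ub. auto. Qed.
Lemma meet_l a b : meet a b ⊑ a. Proof. apply fmeet_lb_l. Qed.
Lemma meet_r a b : meet a b ⊑ b. Proof. apply fmeet_lb_r. Qed.
Lemma meet_glb a b c : c ⊑ a -> c ⊑ b -> c ⊑ meet a b. Proof. apply fmeet_glb. Qed.
Lemma meet_mono a b c d : a ⊑ c -> b ⊑ d -> meet a b ⊑ meet c d.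
Proof. intros. apply meet_glb; eapply le_trans; [apply meet_l| |apply meet_r|]; auto. Qed.
Lemma join_mono a b c d : a ⊑ c -> b ⊑ d -> join a b ⊑ join c d.
Proof. intros. apply join_least; eapply le_trans; [| apply join_l| |apply join_r]; auto. Qed.

Lemma meet_sup a (S : L -> Prop) :
  meet a (sup S) ⊑ sup (fun c => exists s, S s /\ c = meet a s).
Proof. rewrite fdistr. auto. Qed.

Lemma meet_sup_le a (S : L -> Prop) b :
  (forall s, S s -> meet a s ⊑ b) -> meet a (sup S) ⊑ b.
Proof. intro H. eapply le_trans; [apply meet_sup|]. apply fsup_least.
  intros c [s [Hs ->]]. auto. Qed.

Lemma meet_join a b c : meet a (join b c) ⊑ join (meet a b) (meet a c).
Proof. apply meet_sup_le. intros s [->| ->]; auto using join_l, join_r. Qed.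

Definition lj (l : list L) : L := sup (fun t => In t l).

Lemma lj_ub l t : In t l -> t ⊑ lj l. Proof. intro. apply fsup_ub. auto. Qed.
Lemma lj_least l b : (forall t, In t l -> t ⊑ b) -> lj l ⊑ b.
Proof. intro. apply fsup_least. auto. Qed.
Lemma lj_nil : lj nil ⊑ fbot L. Proof. apply lj_least. intros t []. Qed.
Lemma lj_cons a l : lj (a :: l) ⊑ join a (lj l).
Proof. apply lj_least. intros t [->|H]. apply join_l.
  eapply le_trans; [apply lj_ub; eauto|apply join_r]. Qed.
Lemma lj_app l1 l2 : lj (l1 ++ l2) ⊑ join (lj l1) (lj l2).
Proof. apply lj_least. intros t H. apply in_app_or in H as [H|H].
  eapply le_trans; [apply lj_ub; eauto|apply join_l].
  eapply le_trans; [apply lj_ub; eauto|apply join_r]. Qed.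

Lemma lj_app' l1 l2 : join (lj l1) (lj l2) ⊑ lj (l1 ++ l2).
Proof. apply join_least; apply sup_mono; intros; apply in_or_app; auto. Qed.

Definition filt (F : L -> Prop) :=
  (forall a b, F a -> a ⊑ b -> F b) /\ F (ftop L) /\ (forall a b, F a -> F b -> F (meet a b)).
Definition ideal (J : L -> Prop) :=
  (forall a b, J b -> a ⊑ b -> J a) /\ J (fbot L) /\ (forall a b, J a -> J b -> J (join a b)).
Definition disj (F J : L -> Prop) := forall a, F a -> J a -> False.

Lemma ideal_lj J l : ideal J -> (forall t, In t l -> J t) -> J (lj l).
Proof.
  intros [HJ1 [HJ2 HJ3]]. induction l as [|a l IH]; intro H.
  - eapply HJ1; [exact HJ2|apply lj_nil].
  - eapply HJ1; [|apply lj_cons]. apply HJ3; simpl in *; auto.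
Qed.

Lemma prime_filter_filt x : @prime_filter L x -> filt x.
Proof. intros [h1 [h2 [h3 _]]]. split; auto. Qed.

Section PF.
Variable x : L -> Prop.
Hypothesis Hx : @prime_filter L x.
Lemma pf_up a b : x a -> a ⊑ b -> x b. Proof. apply (proj1 Hx). Qed.
Lemma pf_top : x (ftop L). Proof. apply (proj1 (proj2 Hx)). Qed.
Lemma pf_meet a b : x a -> x b -> x (meet a b). Proof. apply (proj1 (proj2 (proj2 Hx))). Qed.
Lemma pf_nbot : ~ x (fbot L). Proof. apply (proj1 (proj2 (proj2 (proj2 Hx)))). Qed.
Lemma pf_join a b : x (join a b) -> x a \/ x b. Proof. apply (proj2 (proj2 (proj2 (proj2 Hx)))). Qed.
Lemma pf_meet_iff a b : x (meet a b) <-> x a /\ x b.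
Proof. split. intro h; split; eapply pf_up; eauto using meet_l, meet_r.
  intros [h1 h2]; apply pf_meet; auto. Qed.
Lemma pf_join_iff a b : x (join a b) <-> x a \/ x b.
Proof. split. apply pf_join. intros [h|h]; eapply pf_up; eauto using join_l, join_r. Qed.
Lemma pf_lj l : x (lj l) -> exists t, In t l /\ x t.
Proof.
  induction l as [|a l IH]; intro h.
  - exfalso. apply pf_nbot. eapply pf_up; eauto using lj_nil.
  - apply pf_up with (b := join a (lj l)) in h; [|apply lj_cons].
    apply pf_join in h as [h|h]; [exists a; simpl; auto|].
    destruct (IH h) as [t [? ?]]. exists t; simpl; auto.
Qed.
End PF.

Lemma max_ideal_exists F I : filt F -> ideal I -> disj F I ->
  exists J, ideal J /\ sub I J /\ disj F J /\
    forall J', ideal J' -> disj F J' -> sub J J' -> sub J' J.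
Proof.
  intros HF HI HFI.
  destruct (@zorn L (fun J => ideal J /\ disj F J) I) as [J [[HJ1 HJ2] [HJ3 HJ4]]].
  - split; auto.
  - intros C HC Hch. split.
    + destruct HI as [HI1 [HI2 HI3]]. split; [|split].
      * intros a b [h|[S [h1 h2]]] hab.
        -- left. eapply HI1; eauto.
        -- right; exists S; split; auto.
           destruct (HC S h1) as [[[H1 _] _] _]. eapply H1; eauto.
      * left; auto.
      * intros a b ha hb.
        assert (G : forall a, (I a \/ exists S, C S /\ S a) -> I a \/ exists S, C S /\ S a) by auto.
        destruct ha as [ha|[S1 [h1 h2]]]; destruct hb as [hb|[S2 [k1 k2]]].
        -- left; auto.
        -- right. exists S2. split; auto. destruct (HC S2 k1) as [[[_ [_ H3]] _] HA]. auto.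
        -- right. exists S1. split; auto. destruct (HC S1 h1) as [[[_ [_ H3]] _] HA]. auto.
        -- right. destruct (Hch S1 S2 h1 k1) as [s|s].
           ++ exists S2. split; auto. destruct (HC S2 k1) as [[[_ [_ H3]] _] HA]. auto.
           ++ exists S1. split; auto. destruct (HC S1 h1) as [[[_ [_ H3]] _] HA]. auto.
    + intros a Fa [h|[S [h1 h2]]]; [eapply HFI; eauto|].
      destruct (HC S h1) as [[_ D] _]. eapply D; eauto.
  - exists J. split; [auto|split; [auto|split; [auto|]]].
    intros J' HJ' D S. apply HJ4; auto.
Qed.

Lemma max_ideal_prime F J : filt F -> ideal J -> disj F J ->
  (forall J', ideal J' -> disj F J' -> sub J J' -> sub J' J) ->
  @prime_filter L (fun a => ~ J a).
Proof.
  intros HF HJ D M. destruct HJ as [J1 [J2 J3]]. destruct HF as [F1 [F2 F3]].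
  assert (K : forall a, ~ J a -> exists f j, F f /\ J j /\ f ⊑ join j a).
  { intros a na. apply NNPP. intro N.
    set (J' := fun c => exists j, J j /\ c ⊑ join j a).
    assert (S : sub J' J).
    { apply M.
      - split; [|split].
        + intros c d [j [h1 h2]] h. exists j. split; auto. eapply le_trans; eauto.
        + exists (fbot L). split; auto. apply bot_le.
        + intros c d [j [h1 h2]] [j' [h1' h2']]. exists (join j j'). split; auto.
          apply join_least.
          * eapply le_trans; [exact h2|]. apply join_mono; [apply join_l|auto].
          * eapply le_trans; [exact h2'|]. apply join_mono; [apply join_r|auto].
      - intros c Fc [j [h1 h2]]. apply N. exists c, j. auto.
      - intros c h. exists c. split; auto. apply join_l. }
    apply na. apply S. exists (fbot L). split; auto. apply join_r. }
  split; [|split; [|split; [|split]]].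
  - intros a b na hab jb. apply na. eauto.
  - intro h. eapply D; eauto.
  - intros a b na nb jab.
    destruct (K a na) as [f [j [Ff [Jj Hf]]]].
    destruct (K b nb) as [f' [j' [Ff' [Jj' Hf']]]].
    apply (D (meet f f')); auto.
    apply J1 with (b := join (join j j') (meet a b)); [apply J3; auto|].
    (* meet f f' <= (jj ∨ a) ∧ (jj ∨ b) <= jj ∨ (a ∧ b) *)
    set (u := join j j').
    assert (h1 : meet f f' ⊑ meet (join u a) (join u b)).
    { apply meet_mono.
      - eapply le_trans; [exact Hf|]. apply join_mono; [apply join_l|auto].
      - eapply le_trans; [exact Hf'|]. apply join_mono; [apply join_r|auto]. }
    eapply le_trans; [exact h1|].
    eapply le_trans; [apply meet_join|]. apply join_least.
    + eapply le_trans; [apply meet_r|]. apply join_l.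
    +
      eapply le_trans.
      * apply meet_glb; [apply meet_r|apply meet_l].
      * eapply le_trans; [apply meet_join|]. apply join_mono.
        -- apply meet_r.
        -- apply meet_glb; [apply meet_r|apply meet_l].
  - intro h. apply h. auto.
  - intros a b h. apply NNPP. intro N. apply h. apply J3; apply NNPP; intro; apply N; auto.
Qed.

End FrameLemmas.
Set Implicit Arguments.
Unset Strict Implicit.

Section XLemmas.
Variable L : Frame.
Local Notation "a ⊑ b" := (@fle L a b) (at level 70).
Local Notation sup := (@fsup L).
Local Notation meet := (@fmeet L).
Local Notation join := (@fjoin L).
Local Notation X := (XL L).
Local Notation O := (@XL_open L).
Local Notation Xle := (@XL_le L).
Hint Resolve le_refl : core.

Lemma phi_pf (x : X) : @prime_filter L (fun a => phi a x).
Proof. exact (proj2_sig x). Qed.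

Lemma phi_up a b (x : X) : phi a x -> a ⊑ b -> phi b x.
Proof. apply (pf_up (phi_pf x)). Qed.
Lemma phi_meet a b (x : X) : phi (meet a b) x <-> phi a x /\ phi b x.
Proof. apply (pf_meet_iff (phi_pf x)). Qed.
Lemma phi_join a b (x : X) : phi (join a b) x <-> phi a x \/ phi b x.
Proof. apply (pf_join_iff (phi_pf x)). Qed.
Lemma phi_top (x : X) : phi (ftop L) x. Proof. apply (pf_top (phi_pf x)). Qed.
Lemma phi_bot (x : X) : ~ phi (fbot L) x. Proof. apply (pf_nbot (phi_pf x)). Qed.
Lemma phi_lj l (x : X) : phi (lj l) x -> exists t, In t l /\ phi t x.
Proof. apply (pf_lj (phi_pf x)). Qed.

Fixpoint lm (l : list L) : L := match l with nil => ftop L | a :: l => meet a (lm l) end.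
Lemma lm_lb l t : In t l -> lm l ⊑ t.
Proof. induction l as [|a l IH]; simpl; [intros []|intros [->|H]].
  apply meet_l. eapply le_trans; [apply meet_r|auto]. Qed.
Lemma phi_lm l (x : X) : phi (lm l) x <-> forall t, In t l -> phi t x.
Proof. induction l as [|a l IH]; simpl.
  - split; [intros _ t []|intros; apply phi_top].
  - rewrite phi_meet, IH. split; [intros [h1 h2] t [->|h]; auto|intro h; split; auto].
Qed.
Lemma lm_glb l b : (forall t, In t l -> b ⊑ t) -> b ⊑ lm l.
Proof. induction l as [|a l IH]; simpl; intro H. apply le_top.
  apply meet_glb; auto. Qed.
Lemma lm_app' l1 l2 : lm (l1 ++ l2) ⊑ meet (lm l1) (lm l2).
Proof. apply meet_glb; apply lm_glb; intros; apply lm_lb; apply in_or_app; auto. Qed.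
Lemma lm_app l1 l2 : meet (lm l1) (lm l2) ⊑ lm (l1 ++ l2).
Proof. induction l1 as [|a l IH]; simpl.
  - apply meet_r.
  - apply meet_glb. eapply le_trans; [apply meet_l|apply meet_l].
    eapply le_trans; [|exact IH]. apply meet_mono; auto. apply meet_r. Qed.

Definition upF (a : L) : L -> Prop := fun c => a ⊑ c.
Definition downI (b : L) : L -> Prop := fun c => c ⊑ b.
Lemma upF_filt a : filt (upF a).
Proof. split; [|split]; unfold upF; intros.
  eapply le_trans; eauto. apply le_top. apply meet_glb; auto. Qed.
Lemma downI_ideal b : ideal (downI b).
Proof. split; [|split]; unfold downI; intros.
  eapply le_trans; eauto. apply bot_le. apply join_least; auto. Qed.

Lemma pf_thm F I : filt F -> ideal I -> disj F I ->
  exists x : X, (forall a, F a -> phi a x) /\ (forall a, I a -> ~ phi a x).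
Proof.
  intros HF HI D.
  destruct (max_ideal_exists HF HI D) as [J [HJ [HIJ [DJ MJ]]]].
  pose proof (max_ideal_prime HF HJ DJ MJ) as Hp.
  exists (exist _ (fun a => ~ J a) Hp). unfold phi; simpl. split.
  - intros a Fa Ja. eapply DJ; eauto.
  - intros a Ia h. apply h. apply HIJ; auto.
Qed.

Lemma sep a b : ~ a ⊑ b -> exists x : X, phi a x /\ ~ phi b x.
Proof.
  intro H. destruct (@pf_thm (upF a) (downI b)) as [x [h1 h2]].
  apply upF_filt. apply downI_ideal. intros c h h'. apply H. eapply le_trans; eauto.
  exists x. split. apply h1. apply le_refl. apply h2. apply le_refl.
Qed.

Lemma phi_le a b : (forall x : X, phi a x -> phi b x) -> a ⊑ b.
Proof. intro H. apply NNPP. intro N. destruct (sep N) as [x [h1 h2]]. auto. Qed.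

Lemma phi_cover b (S : L -> Prop) : (forall x : X, phi b x -> exists s, S s /\ phi s x) ->
  exists T, (forall t, In t T -> S t) /\ b ⊑ lj T.
Proof.
  intro H. apply NNPP. intro N.
  set (I := fun c => exists T, (forall t, In t T -> S t) /\ c ⊑ lj T).
  destruct (@pf_thm (upF b) I) as [x [h1 h2]].
  - apply upF_filt.
  - split; [|split].
    + intros c d [T [h1 h2]] h. exists T. split; auto. eapply le_trans; eauto.
    + exists nil. split. intros t []. apply bot_le.
    + intros c d [T1 [h1 h2]] [T2 [k1 k2]]. exists (T1 ++ T2). split.
      intros t h. apply in_app_or in h as [h|h]; auto.
      eapply le_trans; [|apply lj_app']. apply join_mono; auto.
  - intros c h [T [k1 k2]]. apply N. exists T. split; auto. eapply le_trans; eauto.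
  - destruct (H x (h1 b (le_refl _))) as [s [hs hx]].
    apply (h2 s); auto. exists (s :: nil). split. intros t [->|[]]; auto. apply lj_ub. left; auto.
Qed.

Lemma X_ext (x y : X) : (forall a, phi a x <-> phi a y) -> x = y.
Proof.
  destruct x as [x hx], y as [y hy]. unfold phi; simpl. intro H.
  assert (x = y) by (apply set_ext; intros a; apply H). subst.
  f_equal. apply proof_irrelevance.
Qed.

Definition imp (a b : L) : L := sup (fun c => meet c a ⊑ b).
Lemma imp_mp a b : meet (imp a b) a ⊑ b.
Proof.
  eapply le_trans; [apply meet_glb; [apply meet_r|apply meet_l]|].
  apply meet_sup_le. intros s hs. eapply le_trans; [|exact hs].
  apply meet_glb; [apply meet_r|apply meet_l].
Qed.
Lemma imp_intro a b c : meet c a ⊑ b -> c ⊑ imp a b.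
Proof. intro. apply fsup_ub. auto. Qed.

Lemma down_basic c d (z : X) :
  (exists y : X, Xle z y /\ phi c y /\ ~ phi d y) <-> ~ phi (imp c d) z.
Proof.
  split.
  - intros [y [h1 [h2 h3]]] h. apply h3. apply phi_up with (a := meet (imp c d) c).
    apply phi_meet. split; auto. apply h1. exact h. apply imp_mp.
  - intro N.
    destruct (@pf_thm (fun e => exists f, phi f z /\ meet f c ⊑ e) (downI d)) as [y [h1 h2]].
    + split; [|split].
      * intros e e' [f [k1 k2]] k. exists f. split; auto. eapply le_trans; eauto.
      * exists (ftop L). split. apply phi_top. apply le_top.
      * intros e e' [f [k1 k2]] [f' [k1' k2']]. exists (meet f f'). split.
        apply phi_meet; auto. apply meet_glb.
        eapply le_trans; [|exact k2]. apply meet_mono; auto. apply meet_l.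
        eapply le_trans; [|exact k2']. apply meet_mono; auto. apply meet_r.
    + apply downI_ideal.
    + intros e [f [k1 k2]] k. apply N. apply phi_up with (a := f); auto.
      apply imp_intro. eapply le_trans; eauto.
    + exists y. split; [|split].
      * intros a ha. apply h1. exists a. split; auto. apply meet_l.
      * apply h1. exists (ftop L). split. apply phi_top. apply meet_r.
      * apply h2. apply le_refl.
Qed.

Lemma sub_phi a : XL_subbasic (fun x : X => phi a x).
Proof. exists a. left. tauto. Qed.
Lemma sub_nphi a : XL_subbasic (fun x : X => ~ phi a x).
Proof. exists a. right. tauto. Qed.

Lemma open_of_basics (V : X -> Prop) :
  (forall z, V z -> exists c d, phi c z /\ ~ phi d z /\ forall w, phi c w -> ~ phi d w -> V w) ->
  O V.
Proof.
  intros H z Vz. destruct (H z Vz) as [c [d [h1 [h2 h3]]]].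
  exists ((fun x : X => phi c x) :: (fun x : X => ~ phi d x) :: nil). split; [|split].
  - intros S [<-|[<-|[]]]. apply sub_phi. apply sub_nphi.
  - intros S [<-|[<-|[]]]; auto.
  - intros w Hw. apply h3. apply (Hw (fun x : X => phi c x)); simpl; auto.
    apply (Hw (fun x : X => ~ phi d x)); simpl; auto.
Qed.

Lemma basic_of_list (l : list (X -> Prop)) : (forall S, In S l -> XL_subbasic S) ->
  exists c d, forall z, (forall S, In S l -> S z) <-> (phi c z /\ ~ phi d z).
Proof.
  induction l as [|S l IH]; intro H.
  - exists (ftop L), (fbot L). intro z. split.
    + intros _. split. apply phi_top. apply phi_bot.
    + intros _ S [].
  - destruct IH as [c [d IH]]. intros; apply H; simpl; auto.
    destruct (H S (or_introl eq_refl)) as [a [Ha|Ha]].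
    + exists (meet c a), d. intro z. rewrite phi_meet. split.
      * intro h. assert (k : forall S, In S l -> S z) by (intros; apply h; simpl; auto).
        apply IH in k. destruct k. split; auto. split; auto. apply Ha. apply h. simpl; auto.
      * intros [[h1 h2] h3] S' [<-|h]. apply Ha; auto. apply (proj2 (IH z)); auto.
    + exists c, (join d a). intro z. rewrite phi_join. split.
      * intro h. assert (k : forall S, In S l -> S z) by (intros; apply h; simpl; auto).
        apply IH in k. destruct k as [k1 k2]. split; auto.
        intros [k|k]; auto. apply (proj1 (Ha z)) in k; auto. apply h. simpl; auto.
      * intros [h1 h2] S' [<-|h]. apply Ha; auto. apply (proj2 (IH z)); auto.
Qed.

Lemma open_basic (U : X -> Prop) (x : X) : O U -> U x ->
  exists c d, phi c x /\ ~ phi d x /\ forall w, phi c w -> ~ phi d w -> U w.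
Proof.
  intros HU Ux. destruct (HU x Ux) as [l [h1 [h2 h3]]].
  destruct (basic_of_list h1) as [c [d H]]. exists c, d.
  destruct (proj1 (H x) h2). split; auto. split; auto.
  intros w k1 k2. apply h3. apply H; auto.
Qed.

Lemma open_ext (U V : X -> Prop) : (forall x, U x <-> V x) -> O U -> O V.
Proof.
  intros E HU. apply open_of_basics. intros z Vz. apply E in Vz.
  destruct (open_basic HU Vz) as [c [d [h1 [h2 h3]]]]. exists c, d.
  split; auto. split; auto. intros. apply E; auto.
Qed.

Lemma open_phi a : O (fun x => phi a x).
Proof. apply open_of_basics. intros z h. exists a, (fbot L). split; auto. split. apply phi_bot. auto. Qed.
Lemma open_nphi a : O (fun x => ~ phi a x).
Proof. apply open_of_basics. intros z h. exists (ftop L), a. split. apply phi_top. split; auto. Qed.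
Lemma clopen_phi a : clopen O (fun x => phi a x).
Proof. split. apply open_phi. apply open_nphi. Qed.
Lemma clopen_nphi a : clopen O (fun x => ~ phi a x).
Proof. split. apply open_nphi. unfold closed_set. eapply open_ext; [|apply (@open_phi a)].
  intro x. split; [tauto|apply NNPP]. Qed.
Lemma clopen_ext (U V : X -> Prop) : (forall x, U x <-> V x) -> clopen O U -> clopen O V.
Proof. intros E [h1 h2]. split. eapply open_ext; eauto. unfold closed_set in *.
  eapply open_ext; [|exact h2]. intro x. specialize (E x). tauto. Qed.
Lemma upset_phi a : upset Xle (fun x => phi a x).
Proof. intros x y h1 h2. apply h2. exact h1. Qed.
Lemma clopen_upset_phi a : clopen_upset O Xle (fun x => phi a x).
Proof. split. apply clopen_phi. apply upset_phi. Qed.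

Lemma X_topology : is_topology O.
Proof.
  split; [|split].
  - apply open_of_basics. intros z _. exists (ftop L), (fbot L). split. apply phi_top. split. apply phi_bot. auto.
  - intros U V HU HV. apply open_of_basics. intros z [hU hV].
    destruct (open_basic HU hU) as [c [d [h1 [h2 h3]]]].
    destruct (open_basic HV hV) as [c' [d' [h1' [h2' h3']]]].
    exists (meet c c'), (join d d'). rewrite phi_meet, phi_join. split; auto. split; [tauto|].
    intros w. rewrite phi_meet, phi_join. intros [k1 k2] k3. split; auto.
  - intros C HC. apply open_of_basics. intros z [U [hC hU]].
    destruct (open_basic (HC U hC) hU) as [c [d [h1 [h2 h3]]]].
    exists c, d. split; auto. split; auto. intros w k1 k2. exists U. auto.
Qed.

Lemma closure_ext (A B : X -> Prop) x : (forall z, A z <-> B z) -> closure O A x -> closure O B x.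
Proof. intros E H U HU Ux. destruct (H U HU Ux) as [y [h1 h2]]. exists y. split; auto. apply E; auto. Qed.

Lemma closure_sup (S : L -> Prop) (x : X) :
  closure O (fun y => exists a, S a /\ phi a y) x <-> phi (sup S) x.
Proof.
  split.
  - intro H. apply NNPP. intro N.
    destruct (H _ (@open_nphi (sup S)) N) as [y [h1 [a [h2 h3]]]].
    apply h1. eapply phi_up; eauto. apply fsup_ub; auto.
  - intros H U HU Ux. destruct (open_basic HU Ux) as [c [d [h1 [h2 h3]]]].
    apply NNPP. intro N. apply h2.
    apply phi_up with (a := meet c (sup S)). apply phi_meet; auto.
    apply meet_sup_le. intros s hs. apply phi_le. intros y hy. apply NNPP. intro nd.
    apply phi_meet in hy. destruct hy. apply N. exists y. split; eauto.
Qed.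

Definition fincov (D : (X -> Prop) -> Prop) :=
  exists l, (forall U, In U l -> D U) /\ forall x : X, exists U, In U l /\ U x.

Lemma chain_list (C : (X -> Prop) -> Prop) (Ch : ((X -> Prop) -> Prop) -> Prop) l :
  (forall D, Ch D -> sub C D) ->
  (forall D1 D2, Ch D1 -> Ch D2 -> sub D1 D2 \/ sub D2 D1) ->
  (forall U, In U l -> C U \/ exists D, Ch D /\ D U) ->
  exists D, (D = C \/ Ch D) /\ forall U, In U l -> D U.
Proof.
  intros HCD Hch. induction l as [|U l IH]; intro H.
  - exists C. split; auto. intros U [].
  - destruct IH as [D [HD HDl]]. intros; apply H; simpl; auto.
    destruct (H U (or_introl eq_refl)) as [hU|[D' [h1 h2]]].
    + exists D. split; auto. intros V [<-|hV]; auto.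
      destruct HD as [->|HD]; auto. apply (HCD D HD); auto.
    + destruct HD as [->|HD].
      * exists D'. split; auto. intros V [<-|hV]; auto. apply (HCD D' h1); auto.
      * destruct (Hch D D' HD h1) as [s|s].
        -- exists D'. split; auto. intros V [<-|hV]; auto.
        -- exists D. split; auto. intros V [<-|hV]; auto.
Qed.

Lemma list_sets_of (M : (X -> Prop) -> Prop) (G : L -> X -> Prop) (l : list L) :
  (forall t, In t l -> exists U, M U /\ forall z, U z <-> G t z) ->
  exists lU, (forall U, In U lU -> M U) /\ forall z, (exists t, In t l /\ G t z) -> exists U, In U lU /\ U z.
Proof.
  induction l as [|t l IH]; intro H.
  - exists nil. split. intros U []. intros z [t [[] _]].
  - destruct IH as [lU [h1 h2]]. intros; apply H; simpl; auto.
    destruct (H t (or_introl eq_refl)) as [U [k1 k2]].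
    exists (U :: lU). split. intros V [<-|h]; auto.
    intros z [t' [[<-|h] h']]. exists U. split; simpl; auto. apply k2; auto.
    destruct (h2 z) as [V [? ?]]. eauto. exists V. simpl; auto.
Qed.

Lemma remove_one (M : (X -> Prop) -> Prop) S l :
  (forall V, In V l -> M V \/ V = S) ->
  exists m, (forall V, In V m -> M V) /\ forall z, (exists V, In V l /\ V z) -> S z \/ exists V, In V m /\ V z.
Proof.
  induction l as [|V l IH]; intro H.
  - exists nil. split. intros V []. intros z [V [[] _]].
  - destruct IH as [m [h1 h2]]. intros; apply H; simpl; auto.
    destruct (H V (or_introl eq_refl)) as [hV|eV].
    + exists (V :: m). split. intros W [<-|h]; auto.
      intros z [W [[<-|h] h']]. right. exists V. simpl; auto.
      destruct (h2 z) as [k|[W' [? ?]]]; eauto. right. exists W'. simpl; auto.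
    + exists m. split; auto. intros z [W [[<-|h] h']]; [left; rewrite <- eV; auto|apply h2; eauto].
Qed.

Lemma combine_lists (M : (X -> Prop) -> Prop) (l : list (X -> Prop)) :
  (forall S, In S l -> exists m, (forall V, In V m -> M V) /\ forall z, S z \/ exists V, In V m /\ V z) ->
  exists m, (forall V, In V m -> M V) /\ forall z, (forall S, In S l -> S z) \/ exists V, In V m /\ V z.
Proof.
  induction l as [|S l IH]; intro H.
  - exists nil. split. intros V []. intro z. left. intros S [].
  - destruct IH as [m [h1 h2]]. intros; apply H; simpl; auto.
    destruct (H S (or_introl eq_refl)) as [m' [k1 k2]].
    exists (m' ++ m). split. intros V h. apply in_app_or in h as [h|h]; auto.
    intro z. destruct (k2 z) as [k|[V [? ?]]].
    + destruct (h2 z) as [k'|[V [? ?]]].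
      * left. intros S' [<-|h]; [auto|apply k'; exact h].
      * right. exists V. split; auto. apply in_or_app; auto.
    + right. exists V. split; auto. apply in_or_app; auto.
Qed.

Lemma X_compact : compact_set O (fun _ => True).
Proof.
  intros C HCo Hcov. apply NNPP. intro Nfin.
  set (P := fun D : (X -> Prop) -> Prop => (forall U, D U -> O U) /\ ~ fincov D).
  destruct (zorn _ P C) as [M [[MO MN] [CM Mmax]]].
  - split; auto. intros [l [h1 h2]]. apply Nfin. exists l. split; auto.
  - intros Ch HCh Hch. split.
    + intros U [h|[D [h1 h2]]]; auto. apply (proj1 (proj1 (HCh D h1))); auto.
    + intros [l [h1 h2]].
      destruct (@chain_list C Ch l) as [D [HD HDl]].
      * intros D h. apply (HCh D h).
      * auto.
      * auto.
      * destruct HD as [->|HD].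
        -- apply Nfin. exists l. split; auto.
        -- apply (proj2 (proj1 (HCh D HD))). exists l. split; auto.
  - assert (Hns : ~ forall x : X, exists U, M U /\ XL_subbasic U /\ U x).
    { intro H.
      set (Apos := fun a => exists U, M U /\ forall z, U z <-> phi a z).
      set (Bneg := fun b => exists U, M U /\ forall z, U z <-> ~ phi b z).
      set (F := fun c => exists l, (forall b, In b l -> Bneg b) /\ lm l ⊑ c).
      set (I := fun c => exists l, (forall a, In a l -> Apos a) /\ c ⊑ lj l).
      destruct (classic (disj F I)) as [D|D].
      - destruct (@pf_thm F I) as [x [h1 h2]]; auto.
        + split; [|split].
          * intros c d [l [k1 k2]] k. exists l. split; auto. eapply le_trans; eauto.
          * exists nil. split. intros b []. apply le_refl.
          * intros c d [l [k1 k2]] [l' [k1' k2']]. exists (l ++ l'). split.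
            intros b k. apply in_app_or in k as [k|k]; auto.
            eapply le_trans; [apply lm_app'|]. apply meet_mono; auto.
        + split; [|split].
          * intros c d [T [k1 k2]] k. exists T. split; auto. eapply le_trans; eauto.
          * exists nil. split. intros t []. apply bot_le.
          * intros c d [T1 [k1 k2]] [T2 [k1' k2']]. exists (T1 ++ T2). split.
            intros t k. apply in_app_or in k as [k|k]; auto.
            eapply le_trans; [|apply lj_app']. apply join_mono; auto.
        + destruct (H x) as [U [hM [[a [Ha|Ha]] hU]]].
          * apply (h2 a). exists (a :: nil). split. intros t [<-|[]]. exists U; auto.
            apply lj_ub; left; auto. apply Ha; auto.
          * apply (proj1 (Ha x) hU). apply h1. exists (a :: nil). split.
            intros t [<-|[]]. exists U; auto. simpl. apply meet_l.
      - apply D. intros c [lb [hb1 hb2]] [la [ha1 ha2]]. clear D.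
        destruct (@list_sets_of M (fun a z => phi a z) la) as [lU [u1 u2]]. auto.
        destruct (@list_sets_of M (fun b z => ~ phi b z) lb) as [lV [v1 v2]]. auto.
        apply MN. exists (lU ++ lV). split.
        + intros U k. apply in_app_or in k as [k|k]; auto.
        + intro z. destruct (classic (forall b, In b lb -> phi b z)) as [k|k].
          * assert (k' : phi (lj la) z). 
            { apply phi_up with (a := lm lb); [apply phi_lm; auto|]. eapply le_trans; eauto. }
            apply phi_lj in k'. destruct (u2 z k') as [U [? ?]]. exists U. split; auto. apply in_or_app; auto.
          * apply not_all_ex_not in k as [b k]. 
            destruct (v2 z) as [V [? ?]].
            { exists b. split. apply NNPP; intro; apply k; intro; contradiction.
              intro; apply k; auto. }
            exists V. split; auto. apply in_or_app; auto. }
    apply not_all_ex_not in Hns as [x Hx].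
    destruct (Hcov x I) as [U [hC hU]].
    destruct (MO U (CM U hC) x hU) as [l [l1 [l2 l3]]].
    destruct (@combine_lists M l) as [m [m1 m2]].
    { intros S hS.
      assert (nS : ~ M S) by (intro hM; apply Hx; exists S; split; [exact hM|split; [apply l1; exact hS|apply l2; exact hS]]).
      assert (nP : ~ P (fun V => M V \/ V = S)).
      { intro HP. apply nS. apply (Mmax _ HP). intros V h; auto. auto. }
      assert (Fc : fincov (fun V => M V \/ V = S)).
      { apply NNPP. intro N. apply nP. split; auto.
        intros V [h| ->]; auto. apply open_of_basics. intros z hz.
        destruct (l1 S hS) as [a [Ha|Ha]].
        - exists a, (fbot L). split. apply Ha; auto. split. apply phi_bot. intros w hw _. apply Ha; auto.
        - exists (ftop L), a. split. apply phi_top. split. apply Ha; auto. intros w _ hw. apply Ha; auto. }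
      destruct Fc as [l' [k1 k2]].
      destruct (@remove_one M S l') as [m [n1 n2]]; auto.
      exists m. split; [auto|]. intro z. apply n2. destruct (k2 z) as [V [? ?]]. eauto. }
    apply MN. exists (U :: m). split.
    + intros V [<-|h]; auto.
    + intro z. destruct (m2 z) as [k|[V [? ?]]].
      * exists U. split. left; auto. apply l3. auto.
      * exists V. split; auto. right; auto.
Qed.
End XLemmas.
Set Strict Implicit.
Set Implicit Arguments.


Lemma remove_one_gen (T : Type) (M : (T -> Prop) -> Prop) S l :
  (forall V, In V l -> M V \/ V = S) ->
  exists m, (forall V, In V m -> M V) /\ forall z, (exists V, In V l /\ V z) -> S z \/ exists V, In V m /\ V z.
Proof.
  induction l as [|V l IH]; intro H.
  - exists nil. split. intros V []. intros z [V [[] _]].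
  - destruct IH as [m [h1 h2]]. intros; apply H; simpl; auto.
    destruct (H V (or_introl eq_refl)) as [hV|eV].
    + exists (V :: m). split. intros W [<-|h]; auto.
      intros z [W [[<-|h] h']]. right. exists V. simpl; auto.
      destruct (h2 z) as [k|[W' [? ?]]]; eauto. right. exists W'. simpl; auto.
    + exists m. split; [auto|]. intros z [W [[<-|h] h']]; [left; rewrite <- eV; auto|apply h2; eauto].
Qed.

Lemma closed_compact (T : Type) (O : (T -> Prop) -> Prop) K :
  compact_set O (fun _ => True) -> closed_set O K -> compact_set O K.
Proof.
  intros HX HK C HC Hcov.
  destruct (HX (fun U => C U \/ U = (fun x => ~ K x))) as [l [h1 h2]].
  - intros U [h| ->]; auto.
  - intros x _. destruct (classic (K x)) as [k|k].
    + destruct (Hcov x k) as [U [? ?]]. exists U; auto.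
    + exists (fun x => ~ K x). auto.
  - destruct (@remove_one_gen T C (fun x => ~ K x) l h1) as [m [m1 m2]].
    exists m. split; auto. intros x Kx. destruct (m2 x) as [k|k]; auto.
    destruct (h2 x I) as [U [? ?]]; eauto. contradiction.
Qed.

Lemma elems_of_sets (T E : Type) (Q : E -> Prop) (G : E -> T -> Prop) (l : list (T -> Prop)) :
  (forall U, In U l -> exists a, Q a /\ U = G a) ->
  exists la, (forall a, In a la -> Q a) /\ forall z, (exists U, In U l /\ U z) -> exists a, In a la /\ G a z.
Proof.
  induction l as [|U l IH]; intro H.
  - exists nil. split. intros a []. intros z [U [[] _]].
  - destruct IH as [la [h1 h2]]. intros; apply H; simpl; auto.
    destruct (H U (or_introl eq_refl)) as [a [k1 k2]].
    exists (a :: la). split. intros b [<-|h]; auto.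
    intros z [V [[<-|h] h']].
    + exists a. split. left; auto. rewrite <- k2. auto.
    + destruct (h2 z) as [b [? ?]]; eauto. exists b. simpl; auto.
Qed.

Section X2.
Variable L : Frame.
Local Notation "a ⊑ b" := (@fle L a b) (at level 70).
Local Notation sup := (@fsup L).
Local Notation meet := (@fmeet L).
Local Notation join := (@fjoin L).
Local Notation X := (XL L).
Local Notation O := (@XL_open L).
Local Notation Xle := (@XL_le L).
Hint Resolve le_refl : core.

Lemma X_closed_compact K : closed_set O K -> compact_set O K.
Proof. apply closed_compact. apply X_compact. Qed.

Lemma open_closed_compl (W : X -> Prop) : O W -> closed_set O (fun x => ~ W x).
Proof. intro H. unfold closed_set. eapply open_ext; [|exact H]. intro x; split; [tauto|apply NNPP]. Qed.

Lemma open_upset_union (W : X -> Prop) x : O W -> upset Xle W -> W x ->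
  exists a, phi a x /\ forall z, phi a z -> W z.
Proof.
  intros HW HU Wx.
  destruct (X_closed_compact (open_closed_compl HW)
     (fun U => exists a, phi a x /\ U = (fun z => ~ phi a z))) as [l [l1 l2]].
  - intros U [a [_ ->]]. apply open_nphi.
  - intros z nW. assert (N : ~ Xle x z) by (intro h; apply nW; eapply HU; eauto).
    unfold XL_le in N. apply not_all_ex_not in N as [a N].
    exists (fun z => ~ phi a z). split. exists a. split; auto. unfold phi; tauto.
    unfold phi; tauto.
  - destruct (@elems_of_sets X L (fun a => phi a x) (fun a z => ~ phi a z) l l1) as [la [h1 h2]].
    exists (lm la). split. apply phi_lm; auto.
    intros z hz. apply NNPP. intro nW. destruct (l2 z nW) as [U [k1 k2]].
    destruct (h2 z) as [a [k3 k4]]. eauto. apply k4. apply (proj1 (phi_lm la z) hz). auto.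
Qed.

Lemma clopen_upset_is_phi (U : X -> Prop) : clopen_upset O Xle U ->
  exists a, forall z, U z <-> phi a z.
Proof.
  intros [[HO HC] HU].
  destruct (X_closed_compact HC (fun V => exists a, (forall z, phi a z -> U z) /\ V = (fun z => phi a z)))
    as [l [l1 l2]].
  - intros V [a [_ ->]]. apply open_phi.
  - intros z Uz. destruct (@open_upset_union U z HO HU Uz) as [a [h1 h2]].
    exists (fun z => phi a z). split; auto. exists a; auto.
  - destruct (@elems_of_sets X L (fun a => forall z, phi a z -> U z) (fun a z => phi a z) l l1)
      as [la [h1 h2]].
    exists (lj la). intro z. split.
    + intro Uz. destruct (h2 z (l2 z Uz)) as [a [k1 k2]]. eapply phi_up; eauto. apply lj_ub; auto.
    + intro h. apply phi_lj in h as [a [k1 k2]]. eapply h1; eauto.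
Qed.

Lemma esakia (A : X -> Prop) : clopen O A -> clopen O (downset_of Xle A).
Proof.
  intros [HO HC].
  destruct (X_closed_compact HC (fun V => exists p : L * L,
      (forall w, phi (fst p) w -> ~ phi (snd p) w -> A w) /\
      V = (fun w => phi (fst p) w /\ ~ phi (snd p) w))) as [l [l1 l2]].
  - intros V [p [_ ->]]. apply open_of_basics. intros z hz. exists (fst p), (snd p).
    destruct hz. split; auto.
  - intros z Az. destruct (open_basic HO Az) as [c [d [h1 [h2 h3]]]].
    exists (fun w => phi c w /\ ~ phi d w). split; auto. exists (c, d). simpl. split; auto.
  - destruct (@elems_of_sets X (L * L) (fun p => forall w, phi (fst p) w -> ~ phi (snd p) w -> A w)
       (fun p w => phi (fst p) w /\ ~ phi (snd p) w) l l1) as [la [h1 h2]].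
    set (m := lm (map (fun p => imp (fst p) (snd p)) la)).
    apply clopen_ext with (U := fun z => ~ phi m z); [|apply clopen_nphi].
    intro z. split.
    + intro N. unfold m in N. rewrite phi_lm in N. apply not_all_ex_not in N as [t N].
      apply imply_to_and in N as [N1 N2]. apply in_map_iff in N1 as [p [<- N1]].
      apply down_basic in N2 as [y [k1 [k2 k3]]]. exists y. split; auto. eapply h1; eauto.
    + intros [y [Ay zy]] N. destruct (h2 y (l2 y Ay)) as [p [k1 [k2 k3]]].
      assert (D : ~ phi (imp (fst p) (snd p)) z) by (apply down_basic; exists y; auto).
      apply D. unfold m in N. rewrite phi_lm in N. apply N. apply in_map_iff. exists p; auto.
Qed.

Lemma closure_open (W : X -> Prop) : O W -> upset Xle W -> O (closure O W).
Proof.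
  intros HW HU.
  set (S := fun a => forall z, phi a z -> W z).
  apply open_ext with (U := fun x => phi (sup S) x); [|apply open_phi].
  intro x. rewrite <- closure_sup. split; apply closure_ext; intro z.
  - split. intros [a [h1 h2]]. apply h1; auto. intro Wz.
    destruct (@open_upset_union W z HW HU Wz) as [a [? ?]]. exists a; auto.
  - split. intro Wz.
    destruct (@open_upset_union W z HW HU Wz) as [a [? ?]]. exists a; auto.
    intros [a [h1 h2]]. apply h1; auto.
Qed.

Lemma X_priestley : priestley_space O Xle.
Proof.
  split; [split; [apply X_topology|split; [apply X_compact|split]]|split].
  - intros x y nxy.
    assert (N : ~ forall a, phi a x <-> phi a y) by (intro h; apply nxy; apply X_ext; auto).
    apply not_all_ex_not in N as [a N].
    destruct (classic (phi a x)) as [h|h].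
    + exists (fun z => phi a z), (fun z => ~ phi a z).
      split. apply open_phi. split. apply open_nphi. split; auto. split. intro; apply N; tauto. auto.
    + exists (fun z => ~ phi a z), (fun z => phi a z).
      split. apply open_nphi. split. apply open_phi. split; auto. split. apply NNPP; intro; apply N; tauto. auto.
  - intros U HU x Ux. destruct (open_basic HU Ux) as [c [d [h1 [h2 h3]]]].
    exists (fun w => phi c w /\ ~ phi d w). split; [split|split; auto].
    + apply open_of_basics. intros z [k1 k2]. exists c, d. auto.
    + unfold closed_set. apply open_of_basics. intros z hz.
      destruct (classic (phi c z)) as [k|k].
      * assert (phi d z) by (apply NNPP; intro; apply hz; auto).
        exists d, (fbot L). split; auto. split. apply phi_bot. intros w k1 _ [_ k2]; auto.
      * exists (ftop L), c. split. apply phi_top. split; auto. intros w _ k1 [k2 _]; auto.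
    + intros w [k1 k2]; auto.
  - split; [|split].
    + intros x a h; exact h.
    + intros x y z h1 h2 a h; auto.
    + intros x y h1 h2. apply X_ext. intro a. split; [apply h1|apply h2].
  - intros x y N. unfold XL_le in N. apply not_all_ex_not in N as [a N].
    exists (fun z => phi a z). split. apply clopen_upset_phi. unfold phi; split; tauto.
Qed.

Lemma X_Lspace : L_space O Xle.
Proof.
  split. apply X_priestley. split. apply esakia. apply closure_open.
Qed.

End X2.
Set Implicit Arguments.

Section X3.
Variable L : Frame.
Local Notation "a ⊑ b" := (@fle L a b) (at level 70).
Local Notation sup := (@fsup L).
Local Notation meet := (@fmeet L).
Local Notation join := (@fjoin L).
Local Notation X := (XL L).
Local Notation O := (@XL_open L).
Local Notation Xle := (@XL_le L).
Local Notation wb := (@way_below L).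
Hint Resolve le_refl : core.

Definition cpt (x : X) := forall S, phi (sup S) x -> exists s, S s /\ phi s x.

Lemma wb_mono_l b' b a : b' ⊑ b -> wb b a -> wb b' a.
Proof. intros h H S hS. destruct (H S hS) as [T [h1 h2]]. exists T. split; auto. eapply le_trans; eauto. Qed.
Lemma wb_mono_r b a a' : a ⊑ a' -> wb b a -> wb b a'.
Proof. intros h H S hS. apply H. eapply le_trans; eauto. Qed.
Lemma wb_bot a : wb (fbot L) a.
Proof. intros S _. exists nil. split. intros t []. apply bot_le. Qed.
Lemma wb_join b1 b2 a : wb b1 a -> wb b2 a -> wb (join b1 b2) a.
Proof. intros H1 H2 S hS. destruct (H1 S hS) as [T1 [h1 h2]]. destruct (H2 S hS) as [T2 [k1 k2]].
  exists (T1 ++ T2). split. intros t h. apply in_app_or in h as [h|h]; auto.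
  eapply le_trans; [|apply (lj_app' T1 T2)]. apply join_mono; auto. Qed.
Lemma wb_lj T a : (forall t, In t T -> wb t a) -> wb (lj T) a.
Proof. induction T as [|t T IH]; intro H.
  - eapply wb_mono_l; [apply lj_nil|apply wb_bot].
  - eapply wb_mono_l; [apply lj_cons|]. apply wb_join; [apply H; left; auto|apply IH; intros; apply H; right; auto].
Qed.

Lemma wb_compact (Halg : algebraic_frame L) b a :
  wb b a <-> exists k, compact_el k /\ b ⊑ k /\ k ⊑ a.
Proof.
  split.
  - intro H. destruct (H (fun k => compact_el k /\ k ⊑ a)) as [T [h1 h2]].
    + rewrite <- (Halg a). auto.
    + exists (lj T). split; [|split; auto].
      * apply wb_lj. intros t ht. eapply wb_mono_r; [apply lj_ub; eauto|]. apply (h1 t ht).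
      * apply lj_least. intros t ht. apply (h1 t ht).
  - intros [k [h1 [h2 h3]]]. eapply wb_mono_l; eauto. eapply wb_mono_r; eauto.
Qed.

Lemma maxideal_cp k J : compact_el k -> ideal J -> disj (upF k) J ->
  (forall J', ideal J' -> disj (upF k) J' -> sub J J' -> sub J' J) ->
  forall S, ~ J (sup S) -> exists s, S s /\ ~ J s.
Proof.
  intros Hk HJ D M S N. apply NNPP. intro N'.
  assert (AJ : forall s, S s -> J s) by (intros s hs; apply NNPP; intro; apply N'; eauto).
  set (J' := fun c => exists S', (forall s, S' s -> J s) /\ c ⊑ sup S').
  destruct HJ as [J1 [J2 J3]].
  assert (HJ' : sub J' J).
  { apply M.
    - split; [|split].
      + intros c d [S' [h1 h2]] h. exists S'. split; auto. eapply le_trans; eauto.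
      + exists (fun _ => False). split. intros s []. apply bot_le.
      + intros c d [S1 [h1 h2]] [S2 [k1 k2]]. exists (fun s => S1 s \/ S2 s). split.
        intros s [h|h]; auto. apply join_least.
        eapply le_trans; [exact h2|]. apply sup_mono; auto.
        eapply le_trans; [exact k2|]. apply sup_mono; auto.
    - intros c hc [S' [h1 h2]].
      destruct (Hk S' (le_trans hc h2)) as [T [k1 k2]].
      apply (D k); [apply le_refl|]. apply J1 with (b := lj T); auto.
      apply ideal_lj. split; auto. intros t ht. apply h1. apply k1; auto.
    - intros c hc. exists (fun s => s = c). split. intros s ->; auto. apply fsup_ub; auto. }
  apply N. apply HJ'. exists S. split; auto.
Qed.

Lemma cp_spatial (x : X) : cpt x -> spatial_pt O Xle x.
Proof.
  intro H. set (s0 := sup (fun a => ~ phi a x)).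
  assert (ns0 : ~ phi s0 x) by (intro h; destruct (H _ h) as [s [h1 h2]]; auto).
  apply clopen_ext with (U := fun z => ~ phi s0 z); [|apply clopen_nphi].
  intro z. split.
  - intro h. exists x. split; auto. intros a ha. apply NNPP. intro na. apply h.
    eapply phi_up; eauto. apply fsup_ub. auto.
  - intros [y [-> h]] h'. apply ns0. apply h. auto.
Qed.

Lemma spatial_cp (x : X) : spatial_pt O Xle x -> cpt x.
Proof.
  intros [HO HC].
  set (D := downset_of Xle (fun w => w = x)).
  destruct (@clopen_upset_is_phi L (fun z => ~ D z)) as [s0 E].
  { split; [split|].
    - exact HC.
    - unfold closed_set. eapply open_ext; [|exact HO]. intro z; split; [tauto|apply NNPP].
    - intros z w nz zw [y [-> h]]. apply nz. exists x. split; auto. intros a ha. apply h, zw, ha. }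
  assert (Dx : D x) by (exists x; split; auto; intros a h; exact h).
  intros S hS. apply NNPP. intro N.
  assert (K : forall t, S t -> t ⊑ s0).
  { intros t ht. apply NNPP. intro nt. destruct (sep nt) as [z [z1 z2]].
    assert (Dz : D z) by (apply NNPP; intro nD; apply z2; apply E; auto).
    destruct Dz as [y [-> zy]]. apply N. exists t. split; [exact ht|apply zy; exact z1]. }
  apply (proj2 (E x)); auto. eapply phi_up; eauto. apply fsup_least. auto.
Qed.

Lemma scott_phi k : compact_el k -> clopen_scott_upset O Xle (fun x => phi k x).
Proof.
  intro Hk. split; [apply clopen_phi|]. split; [apply clopen_phi|]. split; [apply upset_phi|].
  intros x [hx Hmin]. apply cp_spatial.
  set (J := fun a => ~ phi a x).
  assert (HJ : ideal J).
  { split; [|split].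
    - intros a b nb h ha. apply nb. eapply phi_up; eauto.
    - apply phi_bot.
    - intros a b na nb h. apply phi_join in h as [h|h]; auto. }
  assert (DJ : disj (upF k) J) by (intros a h1 h2; apply h2; eapply phi_up; eauto).
  assert (M : forall J', ideal J' -> disj (upF k) J' -> sub J J' -> sub J' J).
  { intros J' HJ' DJ' SJ.
    destruct (pf_thm (upF_filt k) HJ' DJ') as [y [y1 y2]].
    assert (E : y = x).
    { apply Hmin. apply y1. apply le_refl.
      intros a ha. apply NNPP. intro na. apply (y2 a); auto. }
    subst y. intros a ha. apply y2; auto. }
  intros S hS. destruct (maxideal_cp Hk HJ DJ M S) as [s [h1 h2]].
  - unfold J. auto.
  - exists s. split; auto. apply NNPP; auto.
Qed.

Lemma closure_upset_phi (W : X -> Prop) x : O W -> upset Xle W ->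
  (closure O W x <-> phi (sup (fun a => forall z, phi a z -> W z)) x).
Proof.
  intros HW HU. rewrite <- closure_sup. split; apply closure_ext; intro z.
  - split. intro Wz.
    destruct (@open_upset_union L W z HW HU Wz) as [a [? ?]]. exists a; auto.
    intros [a [h1 h2]]. apply h1; auto.
  - split. intros [a [h1 h2]]. apply h1; auto. intro Wz.
    destruct (@open_upset_union L W z HW HU Wz) as [a [? ?]]. exists a; auto.
Qed.

Lemma spwb_phi b a : sp_way_below O Xle (fun x => phi b x) (fun x => phi a x) <-> wb b a.
Proof.
  split.
  - intros H S hS.
    set (W := fun z => exists s, S s /\ phi s z).
    assert (HW : O W).
    { apply open_of_basics. intros z [s [h1 h2]]. exists s, (fbot L). split; auto. split. apply phi_bot.
      intros w k _. exists s; auto. }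
    assert (HU : upset Xle W) by (intros z w [s [h1 h2]] zw; exists s; split; [exact h1|apply zw; exact h2]).
    assert (Hb : forall x, phi b x -> W x).
    { apply (H W HW HU). intros x hx. apply closure_sup. eapply phi_up; eauto. }
    apply phi_cover. exact Hb.
  - intros H W HW HU Hcl x hb.
    destruct (H (fun a => forall z, phi a z -> W z)) as [T [h1 h2]].
    + apply phi_le. intros z hz. apply (closure_upset_phi z HW HU). auto.
    + assert (k : phi (lj T) x) by (eapply phi_up; eauto).
      apply phi_lj in k as [t [k1 k2]]. apply (h1 t k1); auto.
Qed.

Lemma ker_phi (U : X -> Prop) a : (forall z, U z <-> phi a z) ->
  forall x, ker O Xle U x <-> exists b, wb b a /\ phi b x.
Proof.
  intros E x. split.
  - intros [V [HV [Hwb Vx]]]. destruct (clopen_upset_is_phi HV) as [b Eb].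
    exists b. split; [|apply Eb; auto].
    apply spwb_phi. intros W HW HU Hcl z hz. apply (Hwb W HW HU).
    + intros y Uy. apply Hcl. apply E. auto.
    + apply Eb. auto.
  - intros [b [h1 h2]]. exists (fun x => phi b x). split; [apply clopen_upset_phi|split; auto].
    intros W HW HU Hcl. apply (proj2 (spwb_phi b a) h1 W HW HU).
    intros y hy. apply Hcl. apply E. auto.
Qed.

Lemma closure_mono (A B : X -> Prop) x : (forall z, A z -> B z) -> closure O A x -> closure O B x.
Proof. intros E H U HU Ux. destruct (H U HU Ux) as [y [h1 h2]]. exists y. split; auto. Qed.

Lemma X_algebraic (Halg : algebraic_frame L) : algebraic_L_space O Xle.
Proof.
  split. apply X_Lspace.
  intros U HU x Ux. destruct (clopen_upset_is_phi HU) as [a E].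
  apply closure_mono with (A := fun y => exists k, (compact_el k /\ k ⊑ a) /\ phi k y).
  - intros y [k [[h1 h2] h3]]. exists (fun z => phi k z). split. apply scott_phi; auto.
    split; auto. intros z hz. apply E. eapply phi_up; eauto.
  - apply closure_sup. rewrite <- (Halg a). apply E; auto.
Qed.

Theorem one_iff_two (Halg : algebraic_frame L) :
  arithmetic_frame L <-> arithmetic_L_space O Xle.
Proof.
  split.
  - intros [_ Hst]. split. apply X_algebraic; auto.
    intros U V HU HV x.
    destruct (clopen_upset_is_phi HU) as [a Ea]. destruct (clopen_upset_is_phi HV) as [c Ec].
    assert (Eac : forall z, (U z /\ V z) <-> phi (meet a c) z).
    { intro z. rewrite phi_meet, Ea, Ec. tauto. }
    rewrite (ker_phi _ _ Eac), (ker_phi _ _ Ea), (ker_phi _ _ Ec). split.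
    + intros [b [h1 h2]]. split; exists b; split; auto. eapply wb_mono_r; [apply meet_l|exact h1]. eapply wb_mono_r; [apply meet_r|exact h1].
    + intros [[b1 [h1 h2]] [b2 [k1 k2]]]. exists (meet b1 b2). split; [|apply phi_meet; auto].
      apply Hst. eapply wb_mono_l; [apply meet_l|exact h1]. eapply wb_mono_l; [apply meet_r|exact k1].
  - intros [_ Hker]. split; auto. intros b a c Ha Hc.
    assert (Ea : forall z, phi a z <-> phi a z) by tauto.
    assert (Ec : forall z, phi c z <-> phi c z) by tauto.
    assert (Eac : forall z, (phi a z /\ phi c z) <-> phi (meet a c) z) by (intro z; rewrite phi_meet; tauto).
    assert (H : forall x, phi b x -> exists d, wb d (meet a c) /\ phi d x).
    { intros x hx. apply (ker_phi _ _ Eac). apply (Hker _ _ (clopen_upset_phi a) (clopen_upset_phi c)).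
      split; apply (ker_phi _ _ (fun z => conj (fun h => h) (fun h => h))); exists b; auto. }
    destruct (phi_cover H) as [T [h1 h2]].
    eapply wb_mono_l; eauto. apply wb_lj. auto.
Qed.

End X3.
Set Implicit Arguments.

Lemma list_sets_gen (T E : Type) (M : (T -> Prop) -> Prop) (G : E -> T -> Prop) (l : list E) :
  (forall t, In t l -> exists U, M U /\ forall z, U z <-> G t z) ->
  exists lU, (forall U, In U lU -> M U) /\ forall z, (exists t, In t l /\ G t z) -> exists U, In U lU /\ U z.
Proof.
  induction l as [|t l IH]; intro H.
  - exists nil. split. intros U []. intros z [t [[] _]].
  - destruct IH as [lU [h1 h2]]. intros; apply H; simpl; auto.
    destruct (H t (or_introl eq_refl)) as [U [k1 k2]].
    exists (U :: lU). split. intros V [<-|h]; auto.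
    intros z [t' [[<-|h] h']]. exists U. split; simpl; auto. apply k2; auto.
    destruct (h2 z) as [V [? ?]]. eauto. exists V. simpl; auto.
Qed.

Section YS.
Variable L : Frame.
Local Notation "a ⊑ b" := (@fle L a b) (at level 70).
Local Notation sup := (@fsup L).
Local Notation meet := (@fmeet L).
Local Notation join := (@fjoin L).
Local Notation X := (XL L).
Local Notation Y := (YL L).
Local Notation O := (@XL_open L).
Local Notation OY := (@YL_open L).
Local Notation Xle := (@XL_le L).
Local Notation wb := (@way_below L).
Hint Resolve le_refl : core.

Definition psi (a : L) (y : Y) : Prop := phi a (proj1_sig y).

Lemma Y_open_iff V : OY V <-> exists a, forall y, V y <-> psi a y.
Proof.
  split.
  - intros [U [HU E]]. destruct (clopen_upset_is_phi HU) as [a Ea]. exists a.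
    intro y. rewrite E, Ea. reflexivity.
  - intros [a E]. exists (fun x => phi a x). split. apply clopen_upset_phi. exact E.
Qed.

Lemma psi_open a : OY (psi a).
Proof. apply Y_open_iff. exists a. reflexivity. Qed.

Lemma cpY (y : Y) : cpt (proj1_sig y).
Proof. apply spatial_cp. exact (proj2_sig y). Qed.

Lemma Y_sep (Halg : algebraic_frame L) a b : ~ a ⊑ b -> exists y : Y, psi a y /\ ~ psi b y.
Proof.
  intro N.
  assert (Hk : exists k, compact_el k /\ k ⊑ a /\ ~ k ⊑ b).
  { apply NNPP. intro N'. apply N. rewrite (Halg a). apply fsup_least.
    intros k [h1 h2]. apply NNPP. intro h3. apply N'. exists k. auto. }
  destruct Hk as [k [hk1 [hk2 hk3]]].
  assert (D : disj (upF k) (downI b)) by (intros c h1 h2; apply hk3; eapply le_trans; eauto).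
  destruct (max_ideal_exists (upF_filt k) (downI_ideal b) D) as [J [HJ [HIJ [DJ MJ]]]].
  pose proof (max_ideal_prime (upF_filt k) HJ DJ MJ) as Hp.
  set (x := exist _ (fun a => ~ J a) Hp : X).
  assert (Cx : cpt x).
  { intros S hS. destruct (maxideal_cp hk1 HJ DJ MJ S hS) as [s [? ?]]. exists s; auto. }
  exists (exist _ x (cp_spatial Cx)). unfold psi, phi; simpl. split.
  - intro Ja. apply (DJ a); auto.
  - intro h. apply h. apply HIJ. apply le_refl.
Qed.

Lemma psi_le (Halg : algebraic_frame L) a b : (forall y, psi a y -> psi b y) -> a ⊑ b.
Proof. intro H. apply NNPP. intro N. destruct (@Y_sep Halg a b N) as [y [h1 h2]]. auto. Qed.

Lemma Y_ext (y1 y2 : Y) : (forall a, psi a y1 <-> psi a y2) -> y1 = y2.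
Proof.
  destruct y1 as [x1 h1], y2 as [x2 h2]. unfold psi; simpl. intro H.
  assert (x1 = x2) by (apply X_ext; auto). subst. f_equal. apply proof_irrelevance.
Qed.

Lemma Ycompact_iff (Halg : algebraic_frame L) K a : (forall y, K y <-> psi a y) ->
  (compact_set OY K <-> compact_el a).
Proof.
  intro E. split.
  - intros HK S hS.
    destruct (HK (fun U => exists s, S s /\ U = psi s)) as [l [l1 l2]].
    + intros U [s [_ ->]]. apply psi_open.
    + intros y Ky. apply E in Ky.
      assert (h : phi (sup S) (proj1_sig y)) by (eapply phi_up; eauto).
      destruct (cpY _ _ h) as [s [h1 h2]]. exists (psi s). split; auto. exists s; auto.
    + destruct (@elems_of_sets Y L S psi l l1) as [la [h1 h2]].
      exists la. split; auto. apply psi_le; auto. intros y hy.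
      destruct (h2 y (l2 y (proj2 (E y) hy))) as [s [k1 k2]].
      eapply phi_up; eauto. apply lj_ub; auto.
  - intros Ha C HC Hcov.
    set (S := fun c => exists U, C U /\ forall y, U y <-> psi c y).
    destruct (Ha S) as [T [h1 h2]].
    + apply psi_le; auto. intros y hy. destruct (Hcov y (proj2 (E y) hy)) as [U [k1 k2]].
      destruct (proj1 (Y_open_iff U) (HC U k1)) as [c Ec].
      eapply phi_up. apply Ec. exact k2. apply fsup_ub. exists U. auto.
    + destruct (@list_sets_gen Y L C psi T) as [lU [u1 u2]].
      { intros t ht. destruct (h1 t ht) as [U [? ?]]. exists U; auto. }
      exists lU. split; auto. intros y Ky. apply u2.
      apply E in Ky. assert (k : phi (lj T) (proj1_sig y)) by (eapply phi_up; eauto).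
      apply phi_lj in k as [t [? ?]]. exists t; auto.
Qed.

Lemma Y_closure_pt (w z : Y) : closure OY (fun v => v = w) z <-> forall c, psi c z -> psi c w.
Proof.
  split.
  - intros H c hc. destruct (H (psi c) (psi_open c) hc) as [v [h1 ->]]. auto.
  - intros H U HU Uz. destruct (proj1 (Y_open_iff U) HU) as [c Ec].
    exists w. split; auto. apply Ec. apply H. apply Ec. auto.
Qed.

Theorem one_iff_three (Halg : algebraic_frame L) :
  arithmetic_frame L <-> stably_compactly_based OY.
Proof.
  split.
  - intros [_ Hst]. split; [|split].
    +
      intros F [HF [[y1 Fy1] Hirr]].
      destruct (proj1 (Y_open_iff _) HF) as [a Ea].
      assert (EF : forall y, F y <-> ~ psi a y).
      { intro y. rewrite <- Ea. split; [tauto|apply NNPP]. }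
      set (p := fun t => ~ t ⊑ a).
      assert (Hp : prime_filter p).
      { split; [|split; [|split; [|split]]].
        - intros t t' h1 h2 h3. apply h1. eapply le_trans; eauto.
        - intro h. apply (proj1 (EF y1) Fy1). eapply phi_up; [apply phi_top|exact h].
        - intros b c hb hc hbc.
          assert (CG : forall d, closed_set OY (fun y => ~ psi d y)).
          { intro d. apply Y_open_iff. exists d. intro y. split; [apply NNPP|tauto]. }
          destruct (Hirr _ _ (CG b) (CG c)) as [G|G].
          + intros y Fy. apply EF in Fy. destruct (classic (psi b y)) as [k|k]; auto.
            destruct (classic (psi c y)) as [k'|k']; auto. exfalso. apply Fy.
            eapply phi_up; [|exact hbc]. apply phi_meet; auto.
          + apply hb. apply psi_le; auto. intros y hy. apply NNPP. intro N.
            apply (G y); auto. apply EF; auto.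
          + apply hc. apply psi_le; auto. intros y hy. apply NNPP. intro N.
            apply (G y); auto. apply EF; auto.
        - intro h. apply h. apply bot_le.
        - intros b c h. apply NNPP. intro N. apply h. apply join_least; apply NNPP; intro; apply N; auto. }
      set (x0 := exist _ p Hp : X).
      assert (C0 : cpt x0).
      { intros S hS. apply NNPP. intro N. apply hS. apply fsup_least. intros s hs.
        apply NNPP. intro ns. apply N. exists s. split; auto. }
      set (y0 := exist _ x0 (cp_spatial C0) : Y).
      assert (Py0 : forall c, psi c y0 <-> ~ c ⊑ a) by (intro c; unfold psi, phi; simpl; reflexivity).
      assert (Key : forall z, F z <-> forall c, psi c z -> psi c y0).
      { intro z. rewrite EF. split.
        - intros nz c hc. apply Py0. intro h. apply nz. eapply phi_up; eauto.
        - intros H ha. apply (proj1 (Py0 a) (H a ha)). apply le_refl. }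
      exists y0. split.
      * intro z. rewrite Y_closure_pt. apply Key.
      * intros y' Hy'. apply Y_ext. intro c.
        assert (K' : forall z, F z <-> forall c, psi c z -> psi c y')
          by (intro z; rewrite Hy', Y_closure_pt; reflexivity).
        split.
        -- intro hc. apply Py0. intro h. apply (proj1 (EF y')).
           ++ apply K'. auto.
           ++ eapply phi_up; eauto.
        -- intro hc. apply (proj1 (K' y0)); auto. apply Key. auto.
    + intros U HU y Uy. destruct (proj1 (Y_open_iff U) HU) as [a Ea].
      assert (h : phi (sup (fun k => compact_el k /\ k ⊑ a)) (proj1_sig y)).
      { rewrite <- (Halg a). apply Ea. auto. }
      destruct (cpY _ _ h) as [k [[k1 k2] k3]].
      exists (psi k). split. apply psi_open. split. apply (Ycompact_iff Halg (psi k) k (fun y => iff_refl _)). auto.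
      split; auto. intros z hz. apply Ea. eapply phi_up; eauto.
    + intros K1 K2 HO1 HC1 HO2 HC2.
      destruct (proj1 (Y_open_iff _) HO1) as [a1 E1].
      destruct (proj1 (Y_open_iff _) HO2) as [a2 E2].
      assert (c1 : compact_el a1) by (apply (Ycompact_iff Halg _ _ E1); auto).
      assert (c2 : compact_el a2) by (apply (Ycompact_iff Halg _ _ E2); auto).
      apply (Ycompact_iff Halg (fun y => K1 y /\ K2 y) (meet a1 a2)).
      * intro y. rewrite E1, E2. unfold psi. rewrite phi_meet. reflexivity.
      * apply Hst. eapply wb_mono_l; [apply meet_l|exact c1]. eapply wb_mono_l; [apply meet_r|exact c2].
  - intros [_ [_ Hint]]. split; auto. intros b a c Ha Hc.
    apply (wb_compact Halg) in Ha as [k1 [h1 [h2 h3]]].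
    apply (wb_compact Halg) in Hc as [k2 [k1' [k2' k3']]].
    apply (wb_compact Halg). exists (meet k1 k2). split; [|split].
    + apply (Ycompact_iff Halg (fun y => psi k1 y /\ psi k2 y) (meet k1 k2)).
      * intro y. unfold psi. rewrite phi_meet. reflexivity.
      * apply Hint. apply psi_open. apply (Ycompact_iff Halg (psi k1) k1 (fun y => iff_refl _)). auto.
        apply psi_open. apply (Ycompact_iff Halg (psi k2) k2 (fun y => iff_refl _)). auto.
    + apply meet_glb; auto.
    + apply meet_mono; auto.
Qed.

End YS.

Theorem theorem5p4 (L : Frame) (Halg : algebraic_frame L) :
  (arithmetic_frame L <-> arithmetic_L_space (@XL_open L) (@XL_le L)) /\
  (arithmetic_L_space (@XL_open L) (@XL_le L) <->
     stably_compactly_based (@YL_open L)).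
Proof.
  split. apply one_iff_two; auto.
  rewrite <- (one_iff_two Halg). apply one_iff_three; auto.
Qed.
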